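(* Let $N\ge2$ and let $q$ be a primitive $4N$-th root of unity with $q^N=\mathbf{i}$. Then (a) $x_N=x_{N-1}=-1$; and (b) for a standard shifted tableau $\Lambda$ and an index $k$ with $q_k\neq q_{k+1}^{\pm1}$ (so that $\beta_k$ is defined), one has $\beta_k=0$ whenever $m_k+m_{k+1}+2=2N$.
   Context: $\mathbf{i}=\sqrt{-1}$, $[m]_{q^2}=(q^{2m}-q^{-2m})/(q^2-q^{-2})$. For each integer $m\ge0$ fix a square root $s_m$ of $[m+1]_{q^2}[m]_{q^2}$ and set $x_m=[m+1]_{q^2}-[m]_{q^2}-(q-q^{-1})s_m$. For a strict partition $\lambda$, its shifted diagram consists of boxes $(i,j)$ with $i\le j\le i+\lambda_i-1$; a standard shifted tableau $\Lambda$ fills it with $1,\dots,n$ increasing along rows and columns. For $1\le k\le n$, $(i_k,j_k)$ is the box containing $k$, $m_k=j_k-i_k$, $q_k=x_{m_k}$, and when $q_k\neq q_{k+1}^{\pm1}$, $\beta_k=1-(q-q^{-1})^2\left(\frac{q_{k+1}^{-1}q_k}{(q_{k+1}^{-1}q_k-1)^2}+\frac{q_{k+1}q_k}{(q_{k+1}q_k-1)^2}\right)$. *)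

(* Defs.v *)
From mathcomp Require Import all_boot all_order all_algebra all_field.
Set Implicit Arguments. Unset Strict Implicit. Unset Printing Implicit Defensive.
Import Order.TTheory GRing.Theory Num.Theory.
Local Open Scope ring_scope.

Definition qint (q : algC) (m : nat) : algC :=
  (q ^+ (2 * m) - q ^- (2 * m)) / (q ^+ 2 - q ^- 2).

(* x_m = [m+1] - [m] - (q - q^{-1}) s_m, with s a chosen family of square roots *)
Definition xval (q : algC) (s : nat -> algC) (m : nat) : algC :=
  qint q m.+1 - qint q m - (q - q^-1) * s m.

(* beta_k in terms of a = q_k and b = q_{k+1} *)
Definition beta (q a b : algC) : algC :=
  1 - (q - q^-1) ^+ 2 *
      ((b^-1 * a) / (b^-1 * a - 1) ^+ 2 + (b * a) / (b * a - 1) ^+ 2).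

Definition strict_partition (lambda : seq nat) : bool :=
  sorted (fun a b => (b < a)%N) lambda && all (fun a => (0 < a)%N) lambda.

(* shifted diagram (1-indexed rows/columns): boxes (i,j), 1 <= i <= l(lambda),
   i <= j <= i + lambda_i - 1 *)
Definition in_shifted_diagram (lambda : seq nat) (b : nat * nat) : bool :=
  [&& (1 <= b.1)%N, (b.1 <= size lambda)%N, (b.1 <= b.2)%N &
      (b.2 <= b.1 + nth 0%N lambda b.1.-1 - 1)%N].

Definition increasing_rows_cols (n : nat) (pos : nat -> nat * nat) : Prop :=
  (forall k l, (1 <= k <= n)%N -> (1 <= l <= n)%N ->
     (pos k).1 = (pos l).1 -> ((pos k).2 < (pos l).2)%N -> (k < l)%N) /\
  (forall k l, (1 <= k <= n)%N -> (1 <= l <= n)%N ->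
     (pos k).2 = (pos l).2 -> ((pos k).1 < (pos l).1)%N -> (k < l)%N).

(* A standard shifted tableau of shape lambda, described by the function
   pos : k |-> (i_k, j_k), the box containing k, for 1 <= k <= n = |lambda|. *)
Definition standard_shifted_tableau (lambda : seq nat) (pos : nat -> nat * nat) : Prop :=
  let n := sumn lambda in
  [/\ strict_partition lambda,
      (forall k, (1 <= k <= n)%N -> in_shifted_diagram lambda (pos k)),
      (forall k l, (1 <= k <= n)%N -> (1 <= l <= n)%N -> pos k = pos l -> k = l),
      (forall b, in_shifted_diagram lambda b -> exists2 k, (1 <= k <= n)%N & pos k = b) &
      increasing_rows_cols n pos].

Definition mk (pos : nat -> nat * nat) (k : nat) : nat := ((pos k).2 - (pos k).1)%N.

(* Main.v *)
Require Import Defs.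
From mathcomp Require Import all_boot all_order all_algebra all_field.
From mathcomp Require Import ring zify.
Import Order.TTheory GRing.Theory Num.Theory.
Local Open Scope ring_scope.

Definition cv q m := qint q m.+1 - qint q m.

Lemma qint_E (q : algC) m : q != 0 ->
  qint q m = (q^+(2 * m) - (q^+(2 * m))^-1)/(q^+2 - q^-2) /\
  qint q m.+1 = (q^+(2 * m) * q^+2 - (q^+(2 * m))^-1 * q^-2)/(q^+2 - q^-2).
Proof.
move=> q0; split => //.
by rewrite /qint mulnS exprD invfM; congr (_ / _); ring.
Qed.

Lemma den_neq0 (q : algC) : q != 0 -> q^+4 != 1 -> q^+2 - q^-2 != 0.
Proof.
move=> q0 q4; rewrite subr_eq0; apply: contra q4 => /eqP h.
have : q^+2 * q^+2 = q^+2 * q^-2 by rewrite -h.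
by rewrite -exprD divff ?expf_neq0 // => ->.
Qed.

Lemma c_id (q : algC) m : q != 0 -> q^+4 != 1 ->
  cv q m ^+2 - (q - q^-1)^+2 * (qint q m.+1 * qint q m) = 1.
Proof.
move=> q0 q4; rewrite /cv; have [-> ->] := @qint_E q m q0.
have d0 := @den_neq0 q q0 q4.
have p0 : q^+(2 * m) != 0 by rewrite expf_neq0.
move: d0 p0; set p := q^+(2 * m) => d0 p0.
field.
by rewrite q0 p0 -expr2 -exprM subr_eq0 q4.
Qed.

Lemma beta_AB (q a b : algC) : q != 0 -> a != 0 -> b != 0 -> a != b -> a * b != 1 ->
  beta q a b = 1 - (q - q^-1)^+2 * ((a + a^-1) * (b + b^-1) - 4) / ((a + a^-1) - (b + b^-1))^+2.
Proof.
move=> q0 a0 b0 ab ab1.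
have h2 : a * b - 1 != 0 by rewrite subr_eq0.
have h4 : a - b != 0 by rewrite subr_eq0.
have -> : (a + a^-1) - (b + b^-1) = (a - b) * (a * b - 1) / (a * b).
  field. by rewrite a0 b0.
rewrite /beta; field.
by rewrite q0 a0 b0 h2 h4.
Qed.

Definition cc (q p : algC) := (p * q^+2 - p^-1 * q^-2)/(q^+2 - q^-2) - (p - p^-1)/(q^+2 - q^-2).

Lemma main_id (q p1 p2 : algC) : q != 0 -> q^+4 != 1 -> p1 != 0 -> p1 * p2 * q^+4 = 1 ->
  (2 * cc q p1 - 2 * cc q p2)^+2 = (q - q^-1)^+2 * ((2 * cc q p1) * (2 * cc q p2) - 4).
Proof.
move=> q0 q4 p10 h.
have -> : p2 = (p1 * q^+4)^-1.
  have hpq : p1 * q^+4 != 0 by rewrite mulf_neq0 ?expf_neq0.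
  by apply: (mulfI hpq); rewrite divff // -h; ring.
rewrite /cc; field.
by rewrite q0 p10 -expr2 -exprM subr_eq0 q4.
Qed.

Lemma cv_cc (q : algC) m : q != 0 -> cv q m = cc q (q^+(2 * m)).
Proof. by move=> q0; rewrite /cv; have [-> ->] := @qint_E q m q0. Qed.

Lemma x_key (q : algC) (s : nat -> algC) m : q != 0 -> q^+4 != 1 ->
  s m ^+ 2 = qint q m.+1 * qint q m ->
  xval q s m != 0 /\ xval q s m + (xval q s m)^-1 = 2 * cv q m.
Proof.
move=> q0 q4 hs.
have h1 : (xval q s m - cv q m)^+2 = (q - q^-1)^+2 * s m ^+ 2.
  by rewrite /xval /cv; ring.
have key : xval q s m ^+ 2 - 2 * cv q m * xval q s m + 1 = 0.
  have := @c_id q m q0 q4; rewrite -hs -h1 => e.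
  transitivity ((xval q s m - cv q m) ^+ 2 - cv q m ^+ 2 + (cv q m ^+ 2 - (xval q s m - cv q m) ^+ 2)).
    by rewrite e; ring.
  by ring.
have x0 : xval q s m != 0.
  apply/eqP => e; move: key; rewrite e; apply/eqP.
  by rewrite expr0n /= mulr0 subr0 add0r oner_eq0.
split => //.
apply: (mulfI x0); rewrite mulrDr mulfV //.
apply/eqP; rewrite -subr_eq0; apply/eqP.
transitivity (xval q s m ^+ 2 - 2 * cv q m * xval q s m + 1); first by ring.
exact: key.
Qed.

Theorem lemma2p31 (N : nat) (q : algC) (s : nat -> algC) :
  (2 <= N)%N ->
  (4 * N)%N.-primitive_root q ->
  q ^+ N = 'i ->
  (forall m : nat, s m ^+ 2 = qint q m.+1 * qint q m) ->
  (xval q s N = -1 /\ xval q s N.-1 = -1) /\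
  (forall (lambda : seq nat) (pos : nat -> nat * nat) (k : nat),
     standard_shifted_tableau lambda pos ->
     (1 <= k)%N -> (k < sumn lambda)%N ->
     xval q s (mk pos k) != xval q s (mk pos k.+1) ->
     xval q s (mk pos k) != (xval q s (mk pos k.+1))^-1 ->
     (mk pos k + mk pos k.+1 + 2 = 2 * N)%N ->
     beta q (xval q s (mk pos k)) (xval q s (mk pos k.+1)) = 0).
Proof.
move=> N2 prim qN hs.
have q4N : q ^+ (4 * N) = 1 := prim_expr_order prim.
have q0 : q != 0.
  apply/eqP => e; move: q4N; rewrite e expr0n.
  have -> : (4 * N == 0)%N = false by apply/negbTE; rewrite muln_eq0 negb_or /=; lia.
  by move/eqP; rewrite eq_sym oner_eq0.
have q4 : q ^+ 4 != 1.
  rewrite -(prim_order_dvd prim); apply/negP => /dvdn_leq h.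
  by have := h isT; lia.
have q2N : q ^+ (2 * N) = -1 by rewrite mulnC exprM qN sqrCi.
have d0 := @den_neq0 q q0 q4.
have qi0 : qint q N = 0.
  by rewrite /qint q2N invrN1 subrr mul0r.
split.
  case: N N2 qN qi0 q2N q4N prim => [|M] // N2 qN qi0 q2N q4N prim.
  have sN : s M.+1 = 0 by apply/eqP; rewrite -sqrf_eq0 hs qi0 mulr0.
  have sM : s M = 0 by apply/eqP; rewrite -sqrf_eq0 hs qi0 mul0r.
  have [_ e1] := @qint_E q M.+1 q0.
  have [e2 _] := @qint_E q M q0.
  have hp : q ^+ (2 * M) * q ^+ 2 = -1 by rewrite -exprD addnC -mulnS.
  have q20 : q ^+ 2 != 0 by rewrite expf_neq0.
  have hp' : q ^+ (2 * M) = - q^-2.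
    by rewrite -[q ^+ (2 * M)](mulfK q20) hp mulN1r.
  rewrite q2N in e1.
  split.
    rewrite /xval sN qi0 e1 mulr0 subr0 subr0; field.
  by rewrite q0 -expr2 -exprM subr_eq0 q4.
  rewrite /= /xval sM qi0 e2 hp' mulr0 subr0; field.
  by rewrite q0 -expr2 -exprM subr_eq0 q4.
move=> lambda pos k _ _ _ hab hab' hsum.
set m1 := mk pos k in hab hab' hsum *.
set m2 := mk pos k.+1 in hab hab' hsum *.
have [a0 hA] := @x_key q s m1 q0 q4 (hs m1).
have [b0 hB] := @x_key q s m2 q0 q4 (hs m2).
set a := xval q s m1 in a0 hA hab hab' *.
set b := xval q s m2 in b0 hB hab hab' *.
have ab1 : a * b != 1.
  apply: contra hab' => /eqP h; apply/eqP.
  by rewrite -[a](mulfK b0) h mul1r.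
rewrite (@beta_AB q a b q0 a0 b0 hab ab1).
have nz : (a + a^-1 - (b + b^-1)) ^+ 2 != 0.
  have -> : (a + a^-1) - (b + b^-1) = (a - b) * (a * b - 1) / (a * b).
    field. by rewrite a0 b0.
  have h1 : a - b != 0 by rewrite subr_eq0.
  have h2 : a * b - 1 != 0 by rewrite subr_eq0.
  have h3 : (a * b)^-1 != 0 by rewrite invr_eq0 mulf_neq0.
  by rewrite expf_neq0 // !mulf_neq0.
move: nz; rewrite hA hB !cv_cc // => nz.
rewrite main_id // in nz *.
  by rewrite divff // subrr.
  by rewrite expf_neq0.
  have e : (2 * m1 + 2 * m2 + 4 = 4 * N)%N.
    clearbody m1 m2; clear -hsum; lia.
  by rewrite -!exprD e.
Qed.
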